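(* Let $G=(X\cup Y,E)$ be a $d$-regular bipartite graph, $c\ge 1$, $t>0$, and let $C\subseteq X\cup Y$ be a cut with $|\nabla(C)|\le td$. Put $A'=C\cap X$, $W'=C\cap Y$ and $S_X:=\{v\in X\setminus A' : |N(v)\setminus W'|\le 3ct\}$. Then every closed $t$-contracting set $A\subseteq X$ with $|A\mathbin{\triangle}A'|\le ct$ satisfies $A\setminus A'\subseteq S_X$.
   Context: $N(S)$ is the neighbourhood of a vertex set $S$. The value $|\nabla(C)|$ of a cut $C$ is the number of edges with exactly one endpoint in $C$. The closure of $A\subseteq X$ is $[A]:=\{x\in X: N(x)\subseteq N(A)\}$, $A$ is closed if $A=[A]$, and $A$ is $t$-contracting if $|N(A)|<|[A]|+t$. *)

(* Defs.v *)
From mathcomp Require Import all_boot all_order all_algebra.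
Set Implicit Arguments. Unset Strict Implicit. Unset Printing Implicit Defensive.

Section Graph.
Variables (T : finType) (adj : rel T).

Definition nbhd (S : {set T}) : {set T} :=
  [set y | [exists x in S, adj x y]].

Definition nbhd1 (v : T) : {set T} := [set y | adj v y].

(* |nabla(C)|: number of edges with exactly one endpoint in C; each such
   edge {u,v} is counted once as the ordered pair (u,v) with u in C, v notin C *)
Definition cut_size (C : {set T}) : nat :=
  #|[set p : T * T | [&& adj p.1 p.2, p.1 \in C & p.2 \notin C]]|.

Definition closure (X A : {set T}) : {set T} :=
  [set x in X | nbhd1 x \subset nbhd A].

Definition is_closed (X A : {set T}) : Prop := A = closure X A.

Definition bipartite_graph (X Y : {set T}) : Prop :=
  [/\ X :&: Y = set0, X :|: Y = [set: T],
      symmetric adj, irreflexive adj &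
      forall u v, adj u v -> (u \in X) && (v \in Y) || (u \in Y) && (v \in X)].

Definition regular (d : nat) : Prop := forall v : T, #|nbhd1 v| = d.

End Graph.

Section Num.
Import GRing.Theory Num.Theory.
Local Open Scope ring_scope.

Definition t_contracting (R : numDomainType) (T : finType) (adj : rel T)
  (X A : {set T}) (t : R) : Prop :=
  (#|nbhd adj A|%:R < #|closure adj X A|%:R + t).
End Num.

(* Main.v *)
Require Import Defs.
From mathcomp Require Import all_boot all_order all_algebra.
From mathcomp Require Import zify ring lra.
Import Order.TTheory GRing.Theory Num.Theory.
Local Open Scope ring_scope.

Lemma card_sumP (T : finType) (P : pred T) : #|[set x | P x]| = (\sum_x (P x : nat))%N.
Proof. rewrite -sum1dep_card big_mkcond /=; apply: eq_bigr => x _; by case: (P x). Qed.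

Lemma card_pairs (T : finType) (P : T -> T -> bool) :
  #|[set p : T * T | P p.1 p.2]| = (\sum_x #|[set y | P x y]|)%N.
Proof.
rewrite (@card_sumP _ (fun p : T * T => P p.1 p.2)).
rewrite -(pair_bigA _ (fun x y => (P x y : nat))) /=.
by apply: eq_bigr => x _; rewrite card_sumP.
Qed.

Lemma card_swap (T : finType) (P : T -> T -> bool) :
  (\sum_x #|[set y | P x y]| = \sum_y #|[set x | P x y]|)%N.
Proof.
rewrite (eq_bigr (fun x => \sum_y (P x y : nat))%N); last by move=> x _; rewrite card_sumP.
rewrite exchange_big /=; apply: eq_bigr => y _; by rewrite card_sumP.
Qed.

Lemma sum_in_mk (T : finType) (K : {set T}) (F : T -> nat) :
  (\sum_(y in K) F y = \sum_y (if y \in K then F y else 0))%N.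
Proof. by rewrite big_mkcond. Qed.

Lemma sum_sub_le (T : finType) (K B : {set T}) (F : T -> nat) :
  K \subset B -> (\sum_(y in K) F y <= \sum_(y in B) F y)%N.
Proof.
move=> /subsetP sKB; rewrite !sum_in_mk; apply: leq_sum => y _.
case: ifP => // yK; by rewrite (sKB y yK).
Qed.

Theorem claim1 (R : realFieldType) (T : finType) (adj : rel T)
  (X Y : {set T}) (d : nat) (c t : R) (C : {set T}) :
  bipartite_graph adj X Y ->
  regular adj d ->
  1 <= c -> 0 < t ->
  (cut_size adj C)%:R <= t * d%:R ->
  let A' := C :&: X in
  let W' := C :&: Y in
  let S_X := [set v in X :\: A' | (#|nbhd1 adj v :\: W'|)%:R <= 3 * c * t] in
  forall A : {set T},
    A \subset X ->
    is_closed adj X A ->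
    t_contracting adj X A t ->
    (#|(A :\: A') :|: (A' :\: A)|)%:R <= c * t ->
    A :\: A' \subset S_X.
Proof.
move=> [hXY hXUY hsym hirr hbip] hreg hc ht hcut A' W' S_X A sAX hcl hcon hdiff.
have adjS : forall x y, adj x y = adj y x by move=> x y; apply: hsym.
have hXY' : forall u v, adj u v -> u \in X -> v \in Y.
  move=> u v /hbip /orP[/andP[_ ->]//|/andP[uY _] uX].
  have : u \in X :&: Y by rewrite inE uX uY.
  by rewrite hXY inE.
apply/subsetP => v; rewrite inE => /andP[vnA' vA].
have vX : v \in X by apply: (subsetP sAX).
rewrite /S_X inE inE vnA' vX /=.
set K := nbhd1 adj v :\: W'.
set NA := nbhd adj A.
set a := #|A :\: A'|.
have h3 : forall y, y \in K ->
   (d <= #|[set x | (x \in A') && adj y x]| + a + #|nbhd1 adj y :\: A|)%N.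
  move=> y _; rewrite -(hreg y).
  have sub : nbhd1 adj y \subset
     [set x | (x \in A') && adj y x] :|: (A :\: A') :|: (nbhd1 adj y :\: A).
    apply/subsetP => x xN.
    rewrite !inE; rewrite inE in xN; rewrite xN /=.
    by case: (x \in A); case: (x \in C); case: (x \in X).
  apply: leq_trans (subset_leq_card sub) _.
  apply: leq_trans (leq_card_setU _ _) _.
  by rewrite leq_add2r; apply: (leq_card_setU _ _).
have hsum3 : (#|K| * d <= \sum_(y in K) #|[set x | (x \in A') && adj y x]|
                + #|K| * a + \sum_(y in K) #|nbhd1 adj y :\: A|)%N.
  have hs : (\sum_(y in K) d <= \sum_(y in K) (#|[set x | (x \in A') && adj y x]|
                + a + #|nbhd1 adj y :\: A|))%N by apply: leq_sum.
  by rewrite !big_split /= !sum_nat_const in hs.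
have hf1 : (\sum_(y in K) #|[set x | (x \in A') && adj y x]| <= cut_size adj C)%N.
  apply: (@leq_trans #|[set p : T * T | (p.1 \in A') && ((p.2 \in K) && adj p.1 p.2)]|).
    rewrite (@card_pairs _ (fun x y => (x \in A') && ((y \in K) && adj x y))) card_swap sum_in_mk.
    apply: leq_sum => y _.
    case: ifP => yK //; apply: subset_leq_card; apply/subsetP => x.
    by rewrite !inE (adjS x y).
  apply: subset_leq_card; apply/subsetP => -[x y]; rewrite !inE /=.
  move=> /and3P[/andP[xC xX] /andP[yW vy] axy].
  have yY : y \in Y by apply: (hXY' v y vy vX).
  by rewrite axy xC /=; move: yW; rewrite yY andbT.
have KNA : K \subset NA.
  apply/subsetP => y; rewrite !inE => /andP[_ vy]; apply/existsP; exists v.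
  by rewrite vA vy.
have e1 : (\sum_(y in NA) (#|nbhd1 adj y :&: A| + #|nbhd1 adj y :\: A|) = #|NA| * d)%N.
  rewrite -sum_nat_const; apply: eq_bigr => y _; by rewrite cardsID hreg.
have e2 : (\sum_(y in NA) #|nbhd1 adj y :&: A| = #|A| * d)%N.
  rewrite sum_in_mk.
  rewrite (eq_bigr (fun y => #|[set x | (x \in A) && ((y \in NA) && adj y x)]|)); last first.
    move=> y _; case: ifP => yN.
      by apply: eq_card => x; rewrite !inE andbC.
    by apply/eqP; rewrite eq_sym cards_eq0; apply/eqP/setP => x; rewrite !inE ?andbF.
  rewrite -(@card_swap _ (fun x y => (x \in A) && ((y \in NA) && adj y x))).
  rewrite -sum_nat_const sum_in_mk; apply: eq_bigr => x _.
  case: ifP => xA.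
    rewrite -(hreg x); apply: eq_card => y; rewrite !inE adjS.
    case axy: (adj x y); rewrite ?andbF ?andbT //=.
    by apply/existsP; exists x; rewrite xA axy.
  apply/eqP; rewrite cards_eq0; apply/eqP/setP => y; by rewrite !inE.
have hf3 : (\sum_(y in K) #|nbhd1 adj y :\: A| + #|A| * d <= #|NA| * d)%N.
  rewrite -e1 big_split /= e2 addnC leq_add2l; exact: sum_sub_le.
have hnat : (#|K| * d + #|A| * d <= cut_size adj C + #|K| * a + #|NA| * d)%N by lia.
have hcon' : #|NA|%:R < #|A|%:R + t by move: hcon; rewrite /t_contracting -hcl.
have ha : a%:R <= c * t.
  apply: le_trans hdiff; rewrite ler_nat; apply: subset_leq_card; exact: subsetUl.
have hkd : (#|K| <= d)%N.
  rewrite -(hreg v); apply: subset_leq_card; exact: subsetDl.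
have hkdR : #|K|%:R <= d%:R :> R by rewrite ler_nat.
have hnatR : #|K|%:R * d%:R + #|A|%:R * d%:R <= (cut_size adj C)%:R + #|K|%:R * a%:R + #|NA|%:R * d%:R :> R.
  by rewrite -!natrM -!natrD ler_nat.
move: hnatR hkdR ha hcon' hcut.
move: (#|K|%:R : R) (d%:R : R) (#|A|%:R : R) (#|NA|%:R : R) (a%:R : R) ((cut_size adj C)%:R : R)
  (ler0n R #|K|) (ler0n R d) (ler0n R a) => k dd m n aa cu k0 d0 a0 g1 g2 g3 g4 g5.
rewrite leNgt; apply/negP => hk.
have h6 : n * dd <= m * dd + t * dd by nra.
have h7 : k * aa <= k * (c * t) by nra.
have h8 : 3 * t < k by nra.
have h9 : 0 < dd - c * t by nra.
have h10 : 3 * t * (dd - c * t) < k * (dd - c * t) by nra.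
have h11 : 0 < t * (dd - 3 * c * t) by nra.
clear -g1 g5 h6 h7 h10 h11; nra.
Qed.
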